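(* Consider a mutation operator on $\{0,1\}^n$ that is either standard bit mutation with mutation probability $p$ satisfying $p=O(1/n)$ and $p\ge n^{-O(1)}$, or the heavy-tailed mutation operator with a constant $\beta>1$, and any fitness function $f$. Then there is a constant $\gamma>1$ such that $p_x^-\le\gamma^{-1}$ for all non-optimal search points $x$. In addition, $p_x^+\ge n^{-O(n)}$ for all non-optimal search points $x$.
   Context: Standard bit mutation with probability $p$ flips each bit independently with probability $p$. Heavy-tailed mutation with $\beta>1$ draws $\chi\in\{1,\dots,n/2\}$ with $\Pr[\chi=i]=i^{-\beta}/\sum_{j=1}^{n/2}j^{-\beta}$ and then performs standard bit mutation with probability $\chi/n$. For a search point $x$, $p_x^+$ (resp. $p_x^-$) is the probability that one application of the mutation operator to $x$ produces a search point of strictly larger (resp. strictly smaller) fitness than $x$. A search point is optimal if it maximises $f$. Asymptotics are with respect to $n\to\infty$. *)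

(* Defs.v *)
From HB Require Import structures.
From mathcomp Require Import all_boot all_order all_algebra.
From mathcomp Require Import all_classical all_reals all_analysis.
Set Implicit Arguments. Unset Strict Implicit. Unset Printing Implicit Defensive.
Import Order.TTheory GRing.Theory Num.Theory.
Local Open Scope ring_scope.

Definition bits (n : nat) := {ffun 'I_n -> bool}.

Section Mutation.
Variable R : realType.

Definition sbm (p : R) (n : nat) (x y : bits n) : R :=
  \prod_(i < n) (if x i != y i then p else 1 - p).

Definition ht_norm (beta : R) (n : nat) : R :=
  \sum_(1 <= j < (n./2).+1) (j%:R `^ (- beta)).

Definition ht_weight (beta : R) (n i : nat) : R :=
  (i%:R `^ (- beta)) / ht_norm beta n.

Definition heavy (beta : R) (n : nat) (x y : bits n) : R :=
  \sum_(1 <= i < (n./2).+1) ht_weight beta n i * sbm (i%:R / n%:R) x y.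

Definition p_plus (n : nat) (op : bits n -> bits n -> R) (f : bits n -> R) (x : bits n) : R :=
  \sum_(y : bits n | f x < f y) op x y.
Definition p_minus (n : nat) (op : bits n -> bits n -> R) (f : bits n -> R) (x : bits n) : R :=
  \sum_(y : bits n | f y < f x) op x y.

Definition optimal (n : nat) (f : bits n -> R) (x : bits n) : Prop :=
  forall y : bits n, f y <= f x.
End Mutation.

(* Main.v *)
Require Import Defs.
From HB Require Import structures.
From mathcomp Require Import all_boot all_order all_algebra.
From mathcomp Require Import all_classical all_reals all_analysis.
From mathcomp Require Import lra ring zify.
Import Order.TTheory GRing.Theory Num.Theory.
Local Open Scope ring_scope.

Section Gen.
Variable R : realType.

Lemma pminus_le n (op : bits n -> bits n -> R) (f : bits n -> R) x :
  (forall y, 0 <= op x y) -> \sum_y op x y = 1 -> p_minus op f x <= 1 - op x x.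
Proof.
move=> h0 h1; rewrite /p_minus; rewrite (bigID (fun y => f y < f x)) /= in h1.
have : op x x <= \sum_(y | ~~ (f y < f x)) op x y.
  by rewrite (bigD1 x) ?ltxx //= lerDl sumr_ge0.
lra.
Qed.

Lemma pplus_ge n (op : bits n -> bits n -> R) (f : bits n -> R) x y :
  (forall y, 0 <= op x y) -> f x < f y -> op x y <= p_plus op f x.
Proof.
by move=> h0 hy; rewrite /p_plus (bigD1 y) //= lerDl sumr_ge0.
Qed.

Lemma notopt n (f : bits n -> R) x : ~ optimal f x -> exists y, f x < f y.
Proof.
move=> h; apply: contrapT => h'; apply: h => y.
by rewrite leNgt; apply/negP => hy; apply: h'; exists y.
Qed.

Lemma sbm_sum (p : R) n (x : bits n) : \sum_(y : bits n) sbm p x y = 1.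
Proof.
rewrite /sbm.
have := bigA_distr_bigA (fun (i : 'I_n) (b : bool) => if x i != b then p else 1 - p).
move=> <-; apply: big1 => i _; rewrite big_bool /=.
by case: (x i) => /=; ring.
Qed.

Lemma sbm_ge0 (p : R) n (x y : bits n) : 0 <= p <= 1 -> 0 <= sbm p x y.
Proof.
move=> /andP[h0 h1]; apply: prodr_ge0 => i _; case: ifP => _ //; lra.
Qed.

Lemma sbm_diag (p : R) n (x : bits n) : sbm p x x = (1 - p) ^+ n.
Proof.
rewrite /sbm (eq_bigr (fun _ => 1 - p)) ?prodr_const ?card_ord // => i _.
by rewrite eqxx.
Qed.

Lemma sbm_lb (p m : R) n (x y : bits n) : 0 <= m -> m <= p -> m <= 1 - p ->
  m ^+ n <= sbm p x y.
Proof.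
move=> h0 h1 h2; rewrite /sbm -[n in m ^+ n]card_ord -prodr_const.
apply: ler_prod => i _; rewrite h0 /=; case: ifP => _ //.
Qed.

Lemma expR_lb (p : R) : 0 <= p <= 2^-1 -> expR (- (2 * p)) <= 1 - p.
Proof.
move=> /andP[h0 h1].
rewrite expRN -[X in X <= _]mul1r ler_pdivrMr ?expR_gt0 //.
have := expR_ge1Dx (2 * p) => h.
have h3 : 0 <= 1 - p by lra.
apply: le_trans (ler_wpM2l h3 h); nra.
Qed.

Lemma pow_lb (p : R) n : 0 <= p <= 2^-1 -> expR (- (2 * (p * n%:R))) <= (1 - p) ^+ n.
Proof.
move=> h; have h' := @expR_lb p h.
rewrite mulrA -mulNr expRM_natr.
apply: lerXn2r => //; [by rewrite nnegrE expR_ge0 | by rewrite nnegrE; apply: le_trans h'; exact: expR_ge0].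
Qed.
End Gen.

Section Heavy.
Variable R : realType.

Lemma term_le1 (beta : R) (j : nat) : 0 <= beta -> (1 <= j)%N -> j%:R `^ (- beta) <= 1.
Proof.
move=> hb hj; rewrite -[X in _ <= X](powRr0 (j%:R : R)).
apply: ler_powR; first by rewrite ler1n.
lra.
Qed.

Lemma S_mono (beta : R) m k : (m <= k)%N ->
  \sum_(1 <= j < m) (j%:R `^ (- beta) : R) <= \sum_(1 <= j < k) j%:R `^ (- beta).
Proof.
move=> hmk; case: m hmk => [|m] hmk.
  by rewrite big_geq // sumr_ge0 // => i _; exact: powR_ge0.
rewrite (@big_cat_nat _ _ _ m.+1 1 k) //=.
by rewrite lerDl sumr_ge0 // => i _; exact: powR_ge0.
Qed.

Lemma two_pow (beta : R) k :
  (2 ^ k)%:R * ((2 ^ k)%N%:R `^ (- beta)) = (2 `^ (1 - beta)) ^+ k :> R.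
Proof.
have h2 : (0 : R) <= 2 by [].
rewrite natrX -!powR_mulrn // -powRrM.
rewrite -powRD; last by rewrite pnatr_eq0 implybT.
by rewrite -powRrM; congr (_ `^ _); ring.
Qed.

Lemma S_dyadic (beta : R) k : 1 < beta ->
  (\sum_(1 <= j < 2 ^ k) (j%:R `^ (- beta) : R)) * (1 - 2 `^ (1 - beta))
    <= 1 - (2 `^ (1 - beta)) ^+ k.
Proof.
move=> hb; set q := 2 `^ (1 - beta).
have hq0 : 0 <= q by exact: powR_ge0.
have hq1 : q < 1.
  rewrite /q /powR /= ifF; last by rewrite pnatr_eq0.
  rewrite expR_lt1 pmulr_llt0 ?ln_gt0 //; lra.
elim: k => [|k IH]; first by rewrite expn0 big_geq // mul0r expr0 subrr.
have h1 : (1 <= 2 ^ k)%N by rewrite expn_gt0.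
have h2 : (2 ^ k <= 2 ^ k.+1)%N by rewrite leq_exp2l.
rewrite (@big_cat_nat _ _ _ (2 ^ k)) //=.
set A := \sum_(1 <= j < 2 ^ k) _ in IH *.
set T := \sum_(2 ^ k <= j < 2 ^ k.+1) _.
have hT : T <= q ^+ k.
  rewrite -two_pow.
  apply: le_trans (_ : \sum_(2 ^ k <= j < 2 ^ k.+1) ((2 ^ k)%N%:R `^ (- beta)) <= _).
    rewrite /T !big_nat; apply: ler_sum => j /andP[hj _].
    rewrite !powRN lef_pV2 ?posrE ?powR_gt0 ?ltr0n ?(leq_trans h1) //.
    by apply: ge0_ler_powR; rewrite ?nnegrE ?ler_nat //; lra.
  rewrite sumr_const_nat expnS mul2n -addnn addnK mulrC mulr_natr.
  by rewrite natrX.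
have hq : 0 <= 1 - q by lra.
have := ler_wpM2r hq hT.
rewrite exprS; nra.
Qed.

Lemma ht_norm_bound (beta : R) n : 1 < beta ->
  ht_norm beta n <= (1 - 2 `^ (1 - beta))^-1.
Proof.
move=> hb; set q := 2 `^ (1 - beta).
have hq0 : 0 <= q by exact: powR_ge0.
have hq1 : q < 1.
  rewrite /q /powR /= ifF; last by rewrite pnatr_eq0.
  rewrite expR_lt1 pmulr_llt0 ?ln_gt0 //; lra.
rewrite /ht_norm.
apply: (le_trans (@S_mono beta _ _ (ltnW (ltn_expl (n./2.+1) (isT : (1 < 2)%N))))).
rewrite -[X in _ <= X]mulr1 ler_pdivlMl; last by lra.
have := @S_dyadic beta (n./2.+1) hb; rewrite -/q => h.
have : 0 <= q ^+ (n./2.+1) by exact: exprn_ge0.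
nra.
Qed.
End Heavy.

Section Heavy2.
Variable R : realType.

Lemma ht_norm_ge1 (beta : R) n : (2 <= n)%N -> 1 <= ht_norm beta n.
Proof.
move=> hn; rewrite /ht_norm big_ltn; last by rewrite ltnS half_gt0.
rewrite powR1 lerDl sumr_ge0 // => i _; exact: powR_ge0.
Qed.

Lemma ht_norm_le (beta : R) n : 0 <= beta -> ht_norm beta n <= n%:R.
Proof.
move=> hb; rewrite /ht_norm.
apply: le_trans (_ : \sum_(1 <= j < n./2.+1) (1 : R) <= _).
  rewrite !big_nat; apply: ler_sum => j /andP[hj _]; exact: term_le1.
rewrite sumr_const_nat subn1 /= ler_nat.
by rewrite -{2}(odd_double_half n) -addnn addnA leq_addl.
Qed.

Lemma heavy_ge0 (beta : R) n (x y : bits n) : (2 <= n)%N -> 0 <= heavy beta x y.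
Proof.
move=> hn; rewrite /heavy big_nat; apply: sumr_ge0 => i /andP[hi1 hi2].
have hN : (0 : R) < ht_norm beta n by apply: lt_le_trans (ht_norm_ge1 beta n hn).
apply: mulr_ge0; first by rewrite /ht_weight divr_ge0 ?powR_ge0 // ltW.
apply: sbm_ge0; rewrite divr_ge0 //= ler_pdivrMr ?ltr0n ?(leq_trans _ hn) // mul1r ler_nat.
apply: leq_trans (ltnW hi2) _.
by have h := hn; rewrite -half_gt0 in h; rewrite -{2}(odd_double_half n) -addnn; lia.
Qed.

Lemma heavy_sum (beta : R) n (x : bits n) : (2 <= n)%N -> \sum_y heavy beta x y = 1.
Proof.
move=> hn; rewrite /heavy exchange_big /=.
have hN : (0 : R) < ht_norm beta n by apply: lt_le_trans (ht_norm_ge1 beta n hn).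
rewrite (eq_bigr (fun i => ht_weight beta n i)); last first.
  by move=> i _; rewrite -mulr_sumr sbm_sum mulr1.
by rewrite /ht_weight -mulr_suml divff // gt_eqF.
Qed.

Lemma heavy_first (beta : R) n (x y : bits n) : (2 <= n)%N ->
  (ht_norm beta n)^-1 * sbm (1 / n%:R) x y <= heavy beta x y.
Proof.
move=> hn; have := @heavy_ge0 beta n x y hn.
rewrite /heavy big_ltn; last by rewrite ltnS half_gt0.
rewrite /ht_weight powR1 mul1r => _.
rewrite lerDl big_nat; apply: sumr_ge0 => i /andP[hi1 hi2].
have hN : (0 : R) < ht_norm beta n by apply: lt_le_trans (ht_norm_ge1 beta n hn).
apply: mulr_ge0; first by rewrite divr_ge0 ?powR_ge0 // ltW.
apply: sbm_ge0; rewrite divr_ge0 //= ler_pdivrMr ?ltr0n ?(leq_trans _ hn) // mul1r ler_nat.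
apply: leq_trans (ltnW hi2) _.
by have h := hn; rewrite -half_gt0 in h; rewrite -{2}(odd_double_half n) -addnn; lia.
Qed.
End Heavy2.

Lemma part1_gen (R : realType) (op : forall n : nat, bits n -> bits n -> R) (c : R) (N : nat) :
  0 < c < 1 ->
  (forall n, (N <= n)%N -> forall x : bits n,
     (forall y, 0 <= op n x y) /\ \sum_y op n x y = 1 /\ c <= op n x x) ->
  (exists gamma : R, 1 < gamma /\
     exists N : nat, forall n : nat, (N <= n)%N ->
       forall (f : bits n -> R) (x : bits n), ~ optimal f x ->
         p_minus (op n) f x <= gamma^-1).
Proof.
move=> /andP[c0 c1] h; exists (1 - c)^-1; split.
  by rewrite invf_gt1; lra.
exists N => n hn f x _; rewrite invrK.
have [h0 [h1 h2]] := h n hn x.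
apply: le_trans (@pminus_le R n (op n) f x h0 h1) _; lra.
Qed.

Lemma natbig (R : realType) (a : R) : exists N : nat, a < N%:R.
Proof. by exists (Num.truncn a).+1; exact: Num.Theory.truncnS_gt. Qed.

Theorem lemma2p3 (R : realType) (op : forall n : nat, bits n -> bits n -> R) :
  ((exists p : nat -> R,
      (forall n, 0 <= p n <= 1) /\
      (exists (C : R) (N : nat), forall n : nat, (N <= n)%N -> p n <= C / n%:R) /\
      (exists (D : R) (N : nat), forall n : nat, (N <= n)%N -> n%:R `^ (- D) <= p n) /\
      (forall n, op n = sbm (p n) (n:=n)))
   \/
   (exists beta : R, 1 < beta /\ forall n, op n = heavy beta (n:=n))) ->
  (exists gamma : R, 1 < gamma /\
     exists N : nat, forall n : nat, (N <= n)%N ->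
       forall (f : bits n -> R) (x : bits n), ~ optimal f x ->
         p_minus (op n) f x <= gamma^-1)
  /\
  (exists (C : R) (N : nat), forall n : nat, (N <= n)%N ->
       forall (f : bits n -> R) (x : bits n), ~ optimal f x ->
         n%:R `^ (- (C * n%:R)) <= p_plus (op n) f x).
Proof.
move=> [[p [hp [[C [N1 hC]] [[D [N2 hD]] hop]]]] | [beta [hb hop]]].
- set C' := Num.max C 1.
  have hC'1 : 1 <= C' by rewrite le_max lexx orbT.
  have hCC' : C <= C' by rewrite le_max lexx.
  have [N3 hN3] := @natbig R (2 * C').
  set N := maxn N1 (maxn N2 (maxn N3 2)).
  have key : forall n, (N <= n)%N ->
      [/\ (0 < n)%N, (2 <= n)%N, p n * n%:R <= C', p n <= 2^-1 & n%:R `^ (- D) <= p n].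
    move=> n hn.
    have hn1 : (N1 <= n)%N by move: hn; rewrite /N; lia.
    have hn2 : (N2 <= n)%N by move: hn; rewrite /N; lia.
    have hn3 : (N3 <= n)%N by move: hn; rewrite /N; lia.
    have hn4 : (2 <= n)%N by move: hn; rewrite /N; lia.
    have n0 : (0 : R) < n%:R by rewrite ltr0n (leq_trans _ hn4).
    have hpn : p n * n%:R <= C'.
      by apply: le_trans hCC'; rewrite -ler_pdivlMr //; exact: hC.
    have hN3' : N3%:R <= n%:R :> R by rewrite ler_nat.
    split => //; [exact: (leq_trans _ hn4) | | exact: hD].
    have hp0 := hp n; move/andP: hp0 => [hp0 _].
    nra.
  split.
  + apply: (@part1_gen R op (expR (- (2 * C'))) N).
      by rewrite expR_gt0 expR_lt1 /=; lra.
    move=> n hn x; have [n0 n2 hpn hp2 _] := key n hn.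
    rewrite hop; split; [by move=> y; apply: sbm_ge0; exact: hp | split; first exact: sbm_sum].
    rewrite sbm_diag; apply: le_trans (@pow_lb R (p n) n _); last by rewrite hp2 andbT; case/andP: (hp n).
    by rewrite ler_expR; lra.
  + set C2 := Num.max D 1.
    have hC21 : 1 <= C2 by rewrite le_max lexx orbT.
    have hDC2 : D <= C2 by rewrite le_max lexx.
    exists C2, N => n hn f x /notopt [y hy].
    have [n0 n2 hpn hp2 hpD] := key n hn.
    have n1 : (1 : R) <= n%:R by rewrite ler1n.
    have h0 : forall z, 0 <= op n x z by move=> z; rewrite hop; apply: sbm_ge0; exact: hp.
    apply: le_trans (@pplus_ge R n (op n) f x y h0 hy); rewrite hop.
    have -> : - (C2 * n%:R) = (- C2) * n%:R by ring.
    rewrite powRrM powR_mulrn; last exact: powR_ge0.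
    apply: sbm_lb; first exact: powR_ge0.
      by apply: le_trans hpD; apply: ler_powR => //; lra.
    apply: (@le_trans _ _ (n%:R `^ (-1))); first by apply: ler_powR => //; lra.
    rewrite powR_inv1 ?ler0n //.
    have : (n%:R : R)^-1 <= 2^-1.
      by rewrite lef_pV2 ?posrE ?ltr0n // ler_nat.
    lra.
- have hb0 : 0 <= beta by lra.
  set q := 2 `^ (1 - beta).
  have hq0 : 0 <= q by exact: powR_ge0.
  have hq1 : q < 1.
    rewrite /q /powR /= ifF; last by rewrite pnatr_eq0.
    rewrite expR_lt1 pmulr_llt0 ?ln_gt0 //; lra.
  have key : forall n, (2 <= n)%N -> [/\ (0 : R) < n%:R, (n%:R : R)^-1 <= 2^-1,
      1 - q <= (ht_norm beta n)^-1 & (n%:R : R)^-1 <= (ht_norm beta n)^-1].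
    move=> n hn.
    have n0 : (0 : R) < n%:R by rewrite ltr0n (leq_trans _ hn).
    have hN : (0 : R) < ht_norm beta n by apply: lt_le_trans (@ht_norm_ge1 R beta n hn).
    split => //.
    + rewrite lef_pV2 ?posrE ?ltr0n //; last by lia.
      by have : (2%:R : R) <= n%:R by rewrite ler_nat.
    + rewrite -[X in X <= _]invrK lef_pV2 ?posrE ?invr_gt0 //; last by lra.
      exact: (@ht_norm_bound R beta n hb).
    + by rewrite lef_pV2 ?posrE //; exact: (@ht_norm_le R beta n hb0).
  split.
  + apply: (@part1_gen R op (expR (-2) * (1 - q)) 2).
      have hc0 : 0 < expR (-2) * (1 - q) by rewrite mulr_gt0 ?expR_gt0 //; lra.
      have : expR (-2) < (1 : R) by rewrite expR_lt1; lra.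
      have := expR_gt0 (-2 : R).
      rewrite hc0 /=; nra.
    move=> n hn x; have [n0 nh hq hn'] := key n hn.
    rewrite hop; split; [by move=> y; exact: (@heavy_ge0 R beta n x y hn) | split; first exact: (@heavy_sum R beta n x hn)].
    apply: le_trans (@heavy_first R beta n x x hn).
    rewrite sbm_diag mulrC; apply: ler_pM; [lra | exact: expR_ge0 | exact: hq | ].
    apply: le_trans (@pow_lb R (1 / n%:R) n _).
        by rewrite mul1r mulVf ?gt_eqF // mulr1.
      by rewrite mul1r invr_ge0 ltW.
  + exists 2, 2%N => n hn f x /notopt [y hy].
    have [n0 nh hq hn'] := key n hn.
    have h0 : forall z, 0 <= op n x z by move=> z; rewrite hop; exact: (@heavy_ge0 R beta n x z hn).
    apply: le_trans (@pplus_ge R n (op n) f x y h0 hy); rewrite hop.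
    apply: le_trans (@heavy_first R beta n x y hn).
    have hm0 : (0 : R) <= (n%:R)^-1 by rewrite invr_ge0 ltW.
    apply: (@le_trans _ _ ((n%:R)^-1 * (n%:R)^-1 ^+ n)); last first.
      apply: ler_pM => //.
      apply: sbm_lb; rewrite ?mul1r //; lra.
    rewrite -exprS exprVn -powR_invn ?ler0n //.
    apply: ler_powR; first by rewrite ler1n (leq_trans _ hn).
    rewrite lerN2 -natrM ler_nat; lia.
Qed.
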